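(* Let $\Psi$ be the interaction on the CAR algebra $\mathcal A^{CAR}(\ell^2(\mathbb Z))$ defined by $\Psi(\{n,n+2l\})=-\frac{2i}{\pi}\,\frac{2l}{(2l)^2-1}\,(a^*_na_{n+2l}-a^*_{n+2l}a_n)$ for $n\in\mathbb Z$, $l\in\mathbb Z$, $l\ge1$, and $\Psi(X)=0$ for all other finite $X\subset\mathbb Z$. Then $\sum_{X\ni0}\Psi(X)$ converges in norm and $$\Big\|\sum_{X\ni0}\Psi(X)\Big\|\le 2\sqrt{1-\frac{4}{\pi^2}}.$$
   Context: $\mathcal A^{CAR}(\ell^2(\mathbb Z))$ is the CAR algebra generated by $a_n=a(e_n)$, $a_n^*=a^*(e_n)$, $n\in\mathbb Z$, where $\{e_n\}$ is the standard basis of $\ell^2(\mathbb Z)$, satisfying $\{a_n,a_m^*\}=\delta_{nm}I$, $\{a_n,a_m\}=0$. The sum $\sum_{X\ni 0}$ runs over all finite subsets $X\subset\mathbb Z$ containing $0$. *)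

(* Defs.v *)
From Stdlib Require Import Reals ZArith List Sorting.Sorted.
Open Scope R_scope.

Record C := mkC { Cre : R; Cim : R }.
Definition C0 : C := mkC 0 0.
Definition C1 : C := mkC 1 0.
Definition Cadd (x y : C) : C := mkC (Cre x + Cre y) (Cim x + Cim y).
Definition Cmul (x y : C) : C :=
  mkC (Cre x * Cre y - Cim x * Cim y) (Cre x * Cim y + Cim x * Cre y).
Definition Cconj (x : C) : C := mkC (Cre x) (- Cim x).
Definition Cmod (x : C) : R := sqrt (Cre x ^ 2 + Cim x ^ 2).

Record CStarAlg := {
  car :> Type;
  zero : car; one : car;
  add : car -> car -> car; opp : car -> car;
  mul : car -> car -> car;
  smul : C -> car -> car;
  star : car -> car;
  norm : car -> R;
  add_assoc : forall x y z, add x (add y z) = add (add x y) z;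
  add_comm : forall x y, add x y = add y x;
  add_zero : forall x, add x zero = x;
  add_opp : forall x, add x (opp x) = zero;
  smul_one : forall x, smul C1 x = x;
  smul_assoc : forall c d x, smul c (smul d x) = smul (Cmul c d) x;
  smul_addr : forall c x y, smul c (add x y) = add (smul c x) (smul c y);
  smul_addl : forall c d x, smul (Cadd c d) x = add (smul c x) (smul d x);
  mul_assoc : forall x y z, mul x (mul y z) = mul (mul x y) z;
  mul_addr : forall x y z, mul x (add y z) = add (mul x y) (mul x z);
  mul_addl : forall x y z, mul (add x y) z = add (mul x z) (mul y z);
  mul_onel : forall x, mul one x = x;
  mul_oner : forall x, mul x one = x;
  smul_mull : forall c x y, mul (smul c x) y = smul c (mul x y);
  smul_mulr : forall c x y, mul x (smul c y) = smul c (mul x y);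
  star_inv : forall x, star (star x) = x;
  star_add : forall x y, star (add x y) = add (star x) (star y);
  star_smul : forall c x, star (smul c x) = smul (Cconj c) (star x);
  star_mul : forall x y, star (mul x y) = mul (star y) (star x);
  norm_nonneg : forall x, 0 <= norm x;
  norm_eq0 : forall x, norm x = 0 -> x = zero;
  norm_triangle : forall x y, norm (add x y) <= norm x + norm y;
  norm_smul : forall c x, norm (smul c x) = Cmod c * norm x;
  norm_submul : forall x y, norm (mul x y) <= norm x * norm y;
  norm_cstar : forall x, norm (mul (star x) x) = norm x * norm x;
  complete : forall u : nat -> car,
    (forall eps, 0 < eps -> exists N, forall p q, (N <= p)%nat -> (N <= q)%nat ->
        norm (add (u p) (opp (u q))) < eps) ->
    exists l, forall eps, 0 < eps -> exists N, forall n, (N <= n)%nat ->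
        norm (add (u n) (opp l)) < eps
}.

Arguments zero {_}. Arguments one {_}. Arguments add {_}. Arguments opp {_}.
Arguments mul {_}. Arguments smul {_}. Arguments star {_}. Arguments norm {_}.

Definition CAR_relations (A : CStarAlg) (a : Z -> A) : Prop :=
  (forall n m : Z, add (mul (a n) (star (a m))) (mul (star (a m)) (a n))
                   = if Z.eqb n m then one else zero) /\
  (forall n m : Z, add (mul (a n) (a m)) (mul (a m) (a n)) = zero).

(** Finite subsets of Z are represented canonically by strictly increasing
    lists of integers. *)
Definition finZset (X : list Z) : Prop := Sorted Z.lt X.

Definition Psi (A : CStarAlg) (a : Z -> A) (X : list Z) : A :=
  match X with
  | n :: m :: nil =>
      if (Z.even (m - n) && (0 <? m - n)%Z)%bool then
        let k := IZR (m - n) in  (* k = 2l *)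
        smul (mkC 0 (- (2 / PI) * (k / (k ^ 2 - 1))))
             (add (mul (star (a n)) (a m)) (opp (mul (star (a m)) (a n))))
      else zero
  | _ => zero
  end.

Definition admissible (F : list (list Z)) : Prop :=
  NoDup F /\ Forall (fun X => finZset X /\ In 0%Z X) F.

Definition sumPsi (A : CStarAlg) (a : Z -> A) (F : list (list Z)) : A :=
  fold_right (fun X acc => add (Psi A a X) acc) zero F.

(** Norm convergence of the (unordered) sum over X \ni 0 to S: the net of
    finite partial sums indexed by finite families of sets X \ni 0. *)
Definition sum_X_ni_0_converges_to (A : CStarAlg) (a : Z -> A) (S : A) : Prop :=
  forall eps, 0 < eps -> exists F0, admissible F0 /\
    forall F, admissible F -> incl F0 F ->
      norm (add (sumPsi A a F) (opp S)) < eps.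

(* Main.v *)
Require Import Defs.
From Stdlib Require Import Reals ZArith List Lra Lia Permutation.
Import ListNotations.
Open Scope R_scope.

Arguments add_assoc {_}.
Arguments add_comm {_}.
Arguments add_zero {_}.
Arguments add_opp {_}.
Arguments smul_one {_}.
Arguments smul_assoc {_}.
Arguments smul_addr {_}.
Arguments smul_addl {_}.
Arguments mul_assoc {_}.
Arguments mul_addr {_}.
Arguments mul_addl {_}.
Arguments mul_onel {_}.
Arguments mul_oner {_}.
Arguments smul_mull {_}.
Arguments smul_mulr {_}.
Arguments star_inv {_}.
Arguments star_add {_}.
Arguments star_smul {_}.
Arguments star_mul {_}.
Arguments norm_nonneg {_}.
Arguments norm_eq0 {_}.
Arguments norm_triangle {_}.
Arguments norm_smul {_}.
Arguments norm_submul {_}.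
Arguments norm_cstar {_}.

Definition rc (r : R) : Defs.C := mkC r 0.
Definition Ci : Defs.C := mkC 0 1.

Section Alg.
Variable A : CStarAlg.

Definition sub (x y : A) : A := add x (opp y).
Definition ac (x y : A) : A := add (mul x y) (mul y x).

Lemma add_0_l (x : A) : add zero x = x.
Proof. rewrite add_comm; apply add_zero. Qed.

Lemma add_cancel_l (x y z : A) : add x y = add x z -> y = z.
Proof.
  intro H.
  assert (E : add (opp x) (add x y) = add (opp x) (add x z)) by (rewrite H; reflexivity).
  rewrite !add_assoc in E. rewrite (add_comm (opp x) x), add_opp, !add_0_l in E. exact E.
Qed.

Lemma opp_unique (x y : A) : add x y = zero -> y = opp x.
Proof. intro H. apply (add_cancel_l x). rewrite H, add_opp. reflexivity. Qed.

Lemma opp_opp (x : A) : opp (opp x) = x.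
Proof. symmetry. apply opp_unique. rewrite add_comm. apply add_opp. Qed.

Lemma opp_zero : opp (zero : A) = zero.
Proof. symmetry. apply opp_unique. apply add_zero. Qed.

Lemma add_swap4 (p q r s : A) : add (add p q) (add r s) = add (add p r) (add q s).
Proof.
  rewrite !add_assoc. f_equal. rewrite <- !add_assoc. f_equal. apply add_comm.
Qed.

Lemma opp_add (x y : A) : opp (add x y) = add (opp x) (opp y).
Proof. symmetry. apply opp_unique. rewrite add_swap4, !add_opp. apply add_zero. Qed.

Lemma x_eq_zero (x : A) : add x x = x -> x = zero.
Proof. intro H. apply (add_cancel_l x). rewrite H, add_zero. reflexivity. Qed.

Lemma smul_zero (c : Defs.C) : smul c (zero : A) = zero.
Proof. apply x_eq_zero. rewrite <- smul_addr, add_zero. reflexivity. Qed.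

Lemma smul_C0 (x : A) : smul (mkC 0 0) x = zero.
Proof.
  apply x_eq_zero. rewrite <- smul_addl. unfold Cadd; simpl. rewrite Rplus_0_l. reflexivity.
Qed.

Lemma smul_opp (c : Defs.C) (x : A) : smul c (opp x) = opp (smul c x).
Proof. apply opp_unique. rewrite <- smul_addr, add_opp. apply smul_zero. Qed.

Lemma opp_smul (x : A) : opp x = smul (rc (-1)) x.
Proof.
  symmetry; apply opp_unique. rewrite <- (smul_one x) at 1. rewrite <- smul_addl.
  unfold Cadd, C1, rc; simpl. replace (1 + -1) with 0 by ring. rewrite Rplus_0_l. apply smul_C0.
Qed.

Lemma mul_zero_l (x : A) : mul zero x = zero.
Proof. apply x_eq_zero. rewrite <- mul_addl, add_zero. reflexivity. Qed.
Lemma mul_zero_r (x : A) : mul x zero = zero.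
Proof. apply x_eq_zero. rewrite <- mul_addr, add_zero. reflexivity. Qed.

Lemma mul_opp_l (x y : A) : mul (opp x) y = opp (mul x y).
Proof. apply opp_unique. rewrite <- mul_addl, add_opp. apply mul_zero_l. Qed.
Lemma mul_opp_r (x y : A) : mul x (opp y) = opp (mul x y).
Proof. apply opp_unique. rewrite <- mul_addr, add_opp. apply mul_zero_r. Qed.

Lemma star_zero : star (zero : A) = zero.
Proof. apply x_eq_zero. rewrite <- star_add, add_zero. reflexivity. Qed.
Lemma star_opp (x : A) : star (opp x) = opp (star x).
Proof. apply opp_unique. rewrite <- star_add, add_opp. apply star_zero. Qed.

Lemma Cconj_rc (r : R) : Cconj (rc r) = rc r.
Proof. unfold Cconj, rc; simpl. rewrite Ropp_0. reflexivity. Qed.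

Lemma Cmod_rc (r : R) : Cmod (rc r) = Rabs r.
Proof. unfold Cmod, rc; simpl. rewrite <- sqrt_Rsqr_abs. f_equal. unfold Rsqr. ring. Qed.
Lemma Cmod_im (r : R) : Cmod (mkC 0 r) = Rabs r.
Proof. unfold Cmod; simpl. rewrite <- sqrt_Rsqr_abs. f_equal. unfold Rsqr. ring. Qed.

Lemma norm_zero : norm (zero : A) = 0.
Proof. rewrite <- (smul_C0 zero). rewrite norm_smul. change (mkC 0 0) with (rc 0). rewrite (Cmod_rc 0). rewrite Rabs_R0. ring. Qed.

Lemma norm_opp (x : A) : norm (opp x) = norm x.
Proof. rewrite opp_smul, norm_smul, Cmod_rc. rewrite Rabs_left by lra. ring. Qed.

Lemma norm_smul_rc (r : R) (x : A) : norm (smul (rc r) x) = Rabs r * norm x.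
Proof. rewrite norm_smul, Cmod_rc. reflexivity. Qed.

Lemma norm_star_le (x : A) : norm x <= norm (star x).
Proof.
  destruct (Req_dec (norm x) 0) as [H|H].
  - rewrite H. apply norm_nonneg.
  - pose proof (norm_cstar x) as E. pose proof (norm_submul (star x) x) as Hm.
    pose proof (norm_nonneg x). rewrite E in Hm.
    apply Rmult_le_reg_r with (norm x). lra. exact Hm.
Qed.

Lemma norm_star (x : A) : norm (star x) = norm x.
Proof.
  apply Rle_antisym.
  - rewrite <- (star_inv x) at 2. apply norm_star_le.
  - apply norm_star_le.
Qed.

Lemma norm_sub_tri (x y z : A) : norm (sub x z) <= norm (sub x y) + norm (sub y z).
Proof.
  replace (sub x z) with (add (sub x y) (sub y z)). apply norm_triangle.
  unfold sub. rewrite <- add_assoc. f_equal. rewrite add_assoc, (add_comm (opp y) y), add_opp. apply add_0_l.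
Qed.

Lemma ac_comm (x y : A) : ac x y = ac y x.
Proof. apply add_comm. Qed.
Lemma ac_add_l (x y z : A) : ac (add x y) z = add (ac x z) (ac y z).
Proof. unfold ac. rewrite mul_addl, mul_addr. apply add_swap4. Qed.
Lemma ac_add_r (x y z : A) : ac z (add x y) = add (ac z x) (ac z y).
Proof. rewrite !(ac_comm z). apply ac_add_l. Qed.
Lemma ac_smul_l (c : Defs.C) (x y : A) : ac (smul c x) y = smul c (ac x y).
Proof. unfold ac. rewrite smul_mull, smul_mulr, smul_addr. reflexivity. Qed.
Lemma ac_smul_r (c : Defs.C) (x y : A) : ac x (smul c y) = smul c (ac x y).
Proof. rewrite !(ac_comm x). apply ac_smul_l. Qed.
Lemma ac_zero_l (x : A) : ac zero x = zero.
Proof. unfold ac. rewrite mul_zero_l, mul_zero_r. apply add_zero. Qed.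
Lemma star_ac (x y : A) : star (ac x y) = ac (star x) (star y).
Proof. unfold ac. rewrite star_add, !star_mul. apply add_comm. Qed.

Lemma smul_rc_add (r s : R) (x : A) : add (smul (rc r) x) (smul (rc s) x) = smul (rc (r + s)) x.
Proof. rewrite <- smul_addl. unfold Cadd, rc; simpl. rewrite Rplus_0_l. reflexivity. Qed.

Lemma smul_rc_mul (r s : R) (x : A) : smul (rc r) (smul (rc s) x) = smul (rc (r * s)) x.
Proof. rewrite smul_assoc. unfold Cmul, rc; simpl. f_equal. f_equal; ring. Qed.

Lemma sq_zero (x : A) : ac x x = zero -> mul x x = zero.
Proof.
  unfold ac. intro H.
  rewrite <- (smul_one (mul x x)). change Defs.C1 with (rc 1).
  replace 1 with (/2 + /2) by field.
  rewrite <- smul_rc_add, <- smul_addr, H. apply smul_zero.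
Qed.

Lemma add_sub_cancel (p q : A) : add (add p q) (opp p) = q.
Proof. rewrite (add_comm p q), <- add_assoc, add_opp. apply add_zero. Qed.

Lemma norm_bound_B (B : A) (s : R) : 0 <= s ->
  ac B B = zero -> ac (star B) B = smul (rc s) one -> norm B * norm B <= s.
Proof.
  intros Hs H1 H2.
  set (P := mul (star B) B).
  assert (HP : mul P P = smul (rc s) P).
  { assert (E : mul B (star B) = add (smul (rc s) one) (opp P)).
    { apply (add_cancel_l P). rewrite <- H2. unfold ac. fold P. rewrite add_sub_cancel. reflexivity. }
    unfold P. rewrite <- !mul_assoc. rewrite (mul_assoc B (star B) B), E.
    rewrite mul_addl, mul_opp_l, smul_mull, mul_onel.
    rewrite mul_addr, mul_opp_r, smul_mulr. unfold P.
    rewrite <- (mul_assoc (star B) B B). rewrite (sq_zero B H1).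
    rewrite !mul_zero_r, opp_zero, add_zero. reflexivity. }
  assert (HPs : star P = P) by (unfold P; rewrite star_mul, star_inv; reflexivity).
  assert (N1 : norm P = norm B * norm B) by apply norm_cstar.
  assert (N2 : norm (mul P P) = norm P * norm P) by (rewrite <- HPs at 1; apply norm_cstar).
  rewrite HP, norm_smul_rc, Rabs_pos_eq in N2 by exact Hs.
  pose proof (norm_nonneg B).
  destruct (Req_dec (norm P) 0) as [Z|Z].
  - rewrite <- N1, Z. exact Hs.
  - assert (s = norm P).
    { apply Rmult_eq_reg_r with (norm P); [lra|exact Z]. }
    lra.
Qed.

End Alg.
Section CAR.
Variable A : CStarAlg.
Variable a : Z -> A.
Hypothesis hCAR : CAR_relations A a.

Definition combc (K : list Z) (f : Z -> R) : A :=
  fold_right (fun k acc => add (smul (rc (f k)) (a k)) acc) zero K.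
Definition sumsq (K : list Z) (f : Z -> R) : R :=
  fold_right (fun k acc => f k * f k + acc) 0 K.

Lemma car1 n m : ac A (a n) (star (a m)) = if Z.eqb n m then one else zero.
Proof. apply (proj1 hCAR). Qed.
Lemma car2 n m : ac A (a n) (a m) = zero.
Proof. apply (proj2 hCAR). Qed.

Lemma comb_ac_star k K f : ~ In k K -> ac A (combc K f) (star (a k)) = zero.
Proof.
  induction K as [|j K IH]; intro H; simpl.
  - apply ac_zero_l.
  - rewrite ac_add_l, ac_smul_l, car1. destruct (Z.eqb_spec j k).
    + exfalso. apply H. left. assumption.
    + rewrite smul_zero, IH. apply add_zero. intro; apply H; right; assumption.
Qed.

Lemma comb_ac k K f : ac A (combc K f) (a k) = zero.
Proof.
  induction K as [|j K IH]; simpl.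
  - apply ac_zero_l.
  - rewrite ac_add_l, ac_smul_l, car2, smul_zero, IH. apply add_zero.
Qed.

Lemma comb_main K f : NoDup K ->
  ac A (combc K f) (combc K f) = zero /\
  ac A (star (combc K f)) (combc K f) = smul (rc (sumsq K f)) one.
Proof.
  induction 1 as [|k K Hk HK IH]; simpl.
  - rewrite star_zero, ac_zero_l. split; [reflexivity|]. symmetry. apply smul_C0.
  - destruct IH as [IH1 IH2]. set (c := combc K f) in *. set (u := smul (rc (f k)) (a k)).
    assert (Hc1 : ac A c (a k) = zero) by exact (comb_ac k K f).
    assert (Hc2 : ac A c (star (a k)) = zero) by exact (comb_ac_star k K f Hk).
    assert (Hu1 : ac A u u = zero) by (unfold u; rewrite ac_smul_l, ac_smul_r, car2, !smul_zero; reflexivity).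
    assert (Hu2 : ac A u c = zero) by (unfold u; rewrite ac_smul_l, ac_comm, Hc1, smul_zero; reflexivity).
    assert (Hu3 : ac A c u = zero) by (unfold u; rewrite ac_smul_r, Hc1, smul_zero; reflexivity).
    split.
    + rewrite ac_add_l, !ac_add_r, Hu1, Hu2, Hu3, IH1, !add_zero. reflexivity.
    + assert (Hs : star u = smul (rc (f k)) (star (a k))) by (unfold u; rewrite star_smul, Cconj_rc; reflexivity).
      rewrite star_add, Hs, ac_add_l, !ac_add_r, IH2.
      unfold u. rewrite !ac_smul_l, !ac_smul_r.
      rewrite (ac_comm A (star (a k)) (a k)), car1, Z.eqb_refl.
      rewrite (ac_comm A (star (a k)) c), Hc2.
      replace (ac A (star c) (a k)) with (star (ac A c (star (a k)))) by (rewrite star_ac, star_inv; reflexivity).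
      rewrite Hc2, star_zero, !smul_zero, add_zero, add_0_l.
      rewrite smul_rc_mul, smul_rc_add. reflexivity.
Qed.

Lemma sumsq_nonneg K f : 0 <= sumsq K f.
Proof. induction K; simpl. lra. pose proof (Rle_0_sqr (f a0)). unfold Rsqr in H. lra. Qed.

Lemma norm_comb K f : NoDup K -> norm (combc K f) * norm (combc K f) <= sumsq K f.
Proof.
  intro H. destruct (comb_main K f H). apply norm_bound_B; auto. apply sumsq_nonneg.
Qed.

Lemma norm_a0 : norm (a 0%Z) <= 1.
Proof.
  pose proof (norm_comb [0%Z] (fun _ => 1) (NoDup_cons 0%Z (fun h : In 0%Z [] => h) (NoDup_nil _))) as H.
  simpl in H. change (rc 1) with Defs.C1 in H. rewrite smul_one, add_zero in H.
  pose proof (norm_nonneg (a 0%Z)). nra.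
Qed.

Definition Lm (B : A) : A := smul Ci (sub A (mul (star (a 0%Z)) B) (mul (star B) (a 0%Z))).

Lemma norm_sub_le (x y : A) : norm (sub A x y) <= norm x + norm y.
Proof. unfold sub. rewrite <- (norm_opp A y). apply norm_triangle. Qed.

Lemma norm_Lm B : norm (Lm B) <= 2 * norm B.
Proof.
  unfold Lm. rewrite norm_smul. unfold Ci. rewrite Cmod_im, Rabs_R1, Rmult_1_l.
  eapply Rle_trans. apply norm_sub_le.
  pose proof (norm_submul (star (a 0%Z)) B). pose proof (norm_submul (star B) (a 0%Z)).
  rewrite norm_star in *. pose proof norm_a0. pose proof (norm_nonneg B). pose proof (norm_nonneg (a 0%Z)).
  nra.
Qed.

Lemma sub_add4 (p q r s : A) : sub A (add p q) (add r s) = add (sub A p r) (sub A q s).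
Proof. unfold sub. rewrite opp_add. apply add_swap4. Qed.

Lemma Lm_add x y : Lm (add x y) = add (Lm x) (Lm y).
Proof. unfold Lm. rewrite star_add, mul_addr, mul_addl, sub_add4, smul_addr. reflexivity. Qed.

Lemma Lm_zero : Lm zero = zero.
Proof. unfold Lm. rewrite star_zero, mul_zero_r, mul_zero_l. unfold sub. rewrite opp_zero, add_zero. apply smul_zero. Qed.

Lemma Lm_opp x : Lm (opp x) = opp (Lm x).
Proof. apply opp_unique. rewrite <- Lm_add, add_opp. apply Lm_zero. Qed.

Lemma Lm_sub x y : Lm (sub A x y) = sub A (Lm x) (Lm y).
Proof. unfold sub at 1. rewrite Lm_add, Lm_opp. reflexivity. Qed.

Lemma combc_app l1 l2 f : combc (l1 ++ l2) f = add (combc l1 f) (combc l2 f).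
Proof. induction l1; simpl. symmetry; apply add_0_l. rewrite IHl1, add_assoc. reflexivity. Qed.

End CAR.
Definition tco (k : Z) : R := -(2/PI)*(IZR k/(IZR k ^2 - 1)).

Definition key (X : list Z) : list Z :=
  match X with
  | n :: m :: nil =>
      if (Z.even (m - n) && (0 <? m - n)%Z)%bool then
        (if Z.eqb n 0 then [m] else [n]) else []
  | _ => []
  end.

Definition keys (F : list (list Z)) : list Z := flat_map key F.

Section PsiSec.
Variable A : CStarAlg.
Variable a : Z -> A.

Lemma Lm_single k : Lm A a (combc A a [k] tco) =
  smul (mkC 0 (tco k)) (sub A (mul (star (a 0%Z)) (a k)) (mul (star (a k)) (a 0%Z))).
Proof.
  unfold Lm; simpl. rewrite add_zero, star_smul, Cconj_rc, smul_mull, smul_mulr.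
  unfold sub. rewrite <- smul_opp, <- smul_addr, smul_assoc. f_equal.
  unfold Cmul, Ci, rc; simpl. f_equal; ring.
Qed.

Lemma smul_im_neg (v : R) (X : A) : smul (mkC 0 (-v)) X = smul (mkC 0 v) (opp X).
Proof.
  rewrite opp_smul, smul_assoc. f_equal. unfold Cmul, rc; simpl. f_equal; ring.
Qed.

Lemma opp_sub (p q : A) : opp (sub A p q) = sub A q p.
Proof. unfold sub. rewrite opp_add, opp_opp. apply add_comm. Qed.

Lemma Psi_key X : In 0%Z X -> Psi A a X = Lm A a (combc A a (key X) tco).
Proof.
  intro H0.
  destruct X as [|n [|m [|p X]]]; simpl; try (symmetry; rewrite Lm_zero; reflexivity).
  destruct (Z.even (m - n) && (0 <? m - n)%Z)%bool eqn:Ec; [|symmetry; simpl; apply Lm_zero].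
  destruct (Z.eqb_spec n 0) as [Hn|Hn].
  - subst n. rewrite Lm_single. rewrite Z.sub_0_r. reflexivity.
  - assert (m = 0%Z) by (destruct H0 as [H0|[H0|[]]]; [congruence|auto]). subst m.
    rewrite Lm_single. rewrite Z.sub_0_l, opp_IZR.
    replace (- IZR n * (- IZR n * 1)) with (IZR n ^ 2) by ring.
    replace (- (2 / PI) * (- IZR n / (IZR n ^ 2 - 1))) with (- tco n) by (unfold tco, Rdiv; ring).
    rewrite smul_im_neg. f_equal. apply opp_sub.
Qed.

Lemma sumPsi_keys F : Forall (fun X => In 0%Z X) F ->
  sumPsi A a F = Lm A a (combc A a (keys F) tco).
Proof.
  induction 1 as [|X F HX HF IH]; simpl.
  - symmetry. apply Lm_zero.
  - unfold keys in *. simpl. rewrite combc_app, Lm_add, <- IH, Psi_key by exact HX. reflexivity.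
Qed.

End PsiSec.
Fixpoint En (n : nat) : list Z :=
  match n with
  | O => []
  | S p => (2 * Z.of_nat (S p))%Z :: (- (2 * Z.of_nat (S p)))%Z :: En p
  end.

Lemma In_En n k : In k (En n) <-> (Z.even k = true /\ k <> 0%Z /\ (Z.abs k <= 2 * Z.of_nat n)%Z).
Proof.
  rewrite Z.even_spec. induction n as [|n IH]; simpl.
  - split; [intros []|]. intros [_ [H1 H2]]. lia.
  - rewrite IH. split.
    + intros [H|[H|[[j Hj] [H1 H2]]]]; subst; repeat split; try lia.
      * exists (Z.of_nat (S n)); lia.
      * exists (- Z.of_nat (S n))%Z; lia.
      * exists j; lia.
    + intros [[j Hj] [H1 H2]]. subst k.
      destruct (Z.eq_dec (Z.abs (2*j)) (2 * Z.of_nat (S n))) as [E|E].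
      * destruct (Z.abs_spec (2*j)) as [[_ F]|[_ F]]; rewrite F in E; [left|right;left]; lia.
      * right; right. split; [exists j; reflexivity|]. lia.
Qed.

Lemma NoDup_En n : NoDup (En n).
Proof.
  induction n as [|n IH]; simpl. constructor.
  constructor.
  - intros [H|H]. lia. apply In_En in H. lia.
  - constructor. intro H. apply In_En in H. lia. exact IH.
Qed.

Fixpoint Gn (n : nat) : list (list Z) :=
  match n with
  | O => []
  | S p => [0%Z; (2 * Z.of_nat (S p))%Z] :: [(- (2 * Z.of_nat (S p)))%Z; 0%Z] :: Gn p
  end.

Lemma In_Gn n X : In X (Gn n) -> exists j, (1 <= j <= Z.of_nat n)%Z /\
   (X = [0%Z; (2*j)%Z] \/ X = [(-(2*j))%Z; 0%Z]).
Proof.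
  induction n as [|n IH]; simpl. intros [].
  intros [H|[H|H]].
  - exists (Z.of_nat (S n)). split. lia. left; subst; reflexivity.
  - exists (Z.of_nat (S n)). split. lia. right; subst; reflexivity.
  - destruct (IH H) as [j [Hj HX]]. exists j. split. lia. exact HX.
Qed.

Lemma key_pos m : (0 < m)%Z -> Z.even m = true -> key [0%Z; m] = [m].
Proof.
  intros H1 H2. unfold key. rewrite Z.sub_0_r, H2. replace (0 <? m)%Z with true by (symmetry; apply Z.ltb_lt; lia).
  reflexivity.
Qed.

Lemma key_neg m : (0 < m)%Z -> Z.even m = true -> key [(-m)%Z; 0%Z] = [(-m)%Z].
Proof.
  intros H1 H2. unfold key. replace (0 - - m)%Z with m by lia. rewrite H2.
  replace (0 <? m)%Z with true by (symmetry; apply Z.ltb_lt; lia).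
  replace (Z.eqb (-m) 0) with false by (symmetry; apply Z.eqb_neq; lia). reflexivity.
Qed.

Lemma even2 j : Z.even (2 * j) = true.
Proof. rewrite Z.even_mul. reflexivity. Qed.

Lemma keys_Gn n : keys (Gn n) = En n.
Proof.
  induction n as [|n IH]; simpl. reflexivity.
  unfold keys in *. simpl. rewrite IH. reflexivity.
Qed.

Lemma l2inj (x1 x2 y1 y2 : Z) : [x1;x2] = [y1;y2] -> x1 = y1 /\ x2 = y2.
Proof. intro H; injection H; auto. Qed.

Lemma admissible_Gn n : admissible (Gn n).
Proof.
  split.
  - induction n as [|n IH]; cbn [Gn]. constructor.
    constructor.
    + intros [H|H]. apply l2inj in H; lia. apply In_Gn in H. destruct H as [j [Hj [H|H]]]; apply l2inj in H; lia.
    + constructor. intro H. apply In_Gn in H. destruct H as [j [Hj [H|H]]]; apply l2inj in H; lia. exact IH.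
  - induction n as [|n IH]; simpl. constructor.
    constructor; [|constructor; [|exact IH]]; split; unfold finZset;
      try (repeat constructor; lia); simpl; auto.
Qed.

Lemma key_shape X : In 0%Z X -> key X = [] \/
  exists k, key X = [k] /\ X = (if (0 <? k)%Z then [0%Z; k] else [k; 0%Z]) /\
            Z.even k = true /\ k <> 0%Z.
Proof.
  intro H0. destruct X as [|n [|m [|p X]]]; simpl; auto.
  destruct (Z.even (m - n) && (0 <? m - n)%Z)%bool eqn:Ec; auto.
  apply andb_prop in Ec. destruct Ec as [E1 E2]. apply Z.ltb_lt in E2.
  right. destruct (Z.eqb_spec n 0) as [Hn|Hn].
  - subst n. exists m. rewrite Z.sub_0_r in E1. replace (0 <? m)%Z with true by (symmetry; apply Z.ltb_lt; lia).
    repeat split; auto; lia.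
  - assert (m = 0%Z) by (destruct H0 as [H0|[H0|[]]]; [congruence|auto]). subst m.
    exists n. replace (0 <? n)%Z with false by (symmetry; apply Z.ltb_ge; lia).
    repeat split; auto. replace n with (- (0 - n))%Z by lia. rewrite Z.even_opp. exact E1.
Qed.

Lemma keys_prop F : admissible F -> NoDup (keys F) /\
  (forall k, In k (keys F) -> Z.even k = true /\ k <> 0%Z).
Proof.
  intros [HN HF]. unfold keys. induction HN as [|X F HX HN IH]; simpl.
  - split. constructor. intros k [].
  - inversion HF as [|? ? [_ H0] HF']; subst. destruct (IH HF') as [IH1 IH2].
    destruct (key_shape X H0) as [E|[k [E [EX [Ek Hk]]]]]; rewrite E; simpl.
    + split; auto.
    + split.
      * constructor; auto. intro Hin. apply in_flat_map in Hin. destruct Hin as [Y [HY Hk']].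
        pose proof HF' as HF2. rewrite Forall_forall in HF2.
        destruct (HF2 Y HY) as [_ HY0].
        destruct (key_shape Y HY0) as [E'|[k' [E' [EY _]]]]; rewrite E' in Hk'. destruct Hk'.
        destruct Hk' as [Hk'|[]]. subst k'. apply HX. rewrite EX, <- EY. exact HY.
      * intros k0 [H|H]. subst; auto. auto.
Qed.

Lemma keys_incl G F : incl G F -> incl (keys G) (keys F).
Proof.
  intros H k Hk. unfold keys in *. apply in_flat_map in Hk. destruct Hk as [X [HX Hk]].
  apply in_flat_map. exists X. auto.
Qed.
Definition mem (k : Z) (l : list Z) : bool := existsb (Z.eqb k) l.
Lemma mem_spec k l : mem k l = true <-> In k l.
Proof.
  unfold mem. rewrite existsb_exists. split.
  - intros [x [Hx E]]. apply Z.eqb_eq in E. subst; auto.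
  - intro H. exists k. split; auto. apply Z.eqb_refl.
Qed.

Definition sumR (g : Z -> R) (l : list Z) : R := fold_right (fun k acc => g k + acc) 0 l.

Section Diff.
Variable A : CStarAlg.
Variable a : Z -> A.

Lemma combc_filter (p : Z -> bool) K f :
  combc A a K f = add (combc A a (filter p K) f) (combc A a (filter (fun k => negb (p k)) K) f).
Proof.
  induction K as [|k K IH]; simpl. symmetry; apply add_zero.
  destruct (p k); simpl; rewrite IH.
  - apply add_assoc.
  - rewrite !add_assoc. f_equal. apply add_comm.
Qed.

Lemma combc_perm K K' f : Permutation K K' -> combc A a K f = combc A a K' f.
Proof.
  induction 1; simpl; auto.
  - rewrite IHPermutation. reflexivity.
  - rewrite !add_assoc. f_equal. apply add_comm.
  - congruence.
Qed.

Lemma combc_ext K f g : (forall k, In k K -> f k = g k) -> combc A a K f = combc A a K g.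
Proof.
  induction K as [|k K IH]; intro H; simpl. reflexivity.
  rewrite H by (left; reflexivity). rewrite IH. reflexivity. intros; apply H; right; auto.
Qed.

Lemma combc_neg K f : combc A a K (fun k => - f k) = opp (combc A a K f).
Proof.
  induction K as [|k K IH]; simpl. symmetry; apply opp_zero.
  rewrite IH, opp_add. f_equal. rewrite opp_smul, smul_rc_mul. f_equal. f_equal. ring.
Qed.

Definition Dl (K1 K2 : list Z) : list Z :=
  filter (fun k => negb (mem k K2)) K1 ++ filter (fun k => negb (mem k K1)) K2.
Definition fD (K1 : list Z) (f : Z -> R) (k : Z) : R := if mem k K1 then f k else - f k.

Lemma sub_cancel_common (c x y : A) : sub A (add c x) (add c y) = sub A x y.
Proof.
  unfold sub. rewrite opp_add, add_swap4, add_opp, add_0_l. reflexivity.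
Qed.

Lemma diff_decomp K1 K2 f : NoDup K1 -> NoDup K2 ->
  sub A (combc A a K1 f) (combc A a K2 f) = combc A a (Dl K1 K2) (fD K1 f).
Proof.
  intros N1 N2.
  rewrite (combc_filter (fun k => mem k K2) K1), (combc_filter (fun k => mem k K1) K2).
  rewrite (combc_perm (filter (fun k => mem k K2) K1) (filter (fun k => mem k K1) K2)).
  - rewrite sub_cancel_common. unfold Dl. rewrite combc_app.
    rewrite (combc_ext (filter (fun k => negb (mem k K2)) K1) (fD K1 f) f).
    rewrite (combc_ext (filter (fun k => negb (mem k K1)) K2) (fD K1 f) (fun k => - f k)).
    + rewrite combc_neg. reflexivity.
    + intros k Hk. apply filter_In in Hk. destruct Hk as [_ Hk]. unfold fD.
      destruct (mem k K1); [discriminate|reflexivity].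
    + intros k Hk. apply filter_In in Hk. destruct Hk as [Hk _]. unfold fD.
      apply mem_spec in Hk. rewrite Hk. reflexivity.
  - apply NoDup_Permutation; try apply NoDup_filter; auto.
    intro x. rewrite !filter_In, !mem_spec. tauto.
Qed.

End Diff.

Lemma NoDup_Dl K1 K2 : NoDup K1 -> NoDup K2 -> NoDup (Dl K1 K2).
Proof.
  intros N1 N2. unfold Dl. apply NoDup_app; try apply NoDup_filter; auto.
  intros x H1 H2. apply filter_In in H1. apply filter_In in H2.
  destruct H1 as [H1 _]. destruct H2 as [_ H2]. apply mem_spec in H1. rewrite H1 in H2. discriminate.
Qed.

Lemma In_Dl K1 K2 k : In k (Dl K1 K2) -> (In k K1 /\ ~ In k K2) \/ (In k K2 /\ ~ In k K1).
Proof.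
  unfold Dl. rewrite in_app_iff, !filter_In. intros [[H1 H2]|[H1 H2]].
  - left. split; auto. intro H. apply mem_spec in H. rewrite H in H2. discriminate.
  - right. split; auto. intro H. apply mem_spec in H. rewrite H in H2. discriminate.
Qed.

Lemma sumsq_fD K1 K f : sumsq K (fD K1 f) = sumsq K f.
Proof.
  induction K as [|k K IH]; simpl. reflexivity. rewrite IH. unfold fD. destruct (mem k K1); ring.
Qed.

Lemma sumR_incl (h : Z -> R) K R0 : NoDup K -> NoDup R0 -> incl K R0 ->
  (forall k, In k R0 -> 0 <= h k) -> sumR h K <= sumR h R0.
Proof.
  intro NK. revert R0. induction NK as [|k K Hk NK IH]; intros R0 NR HI Hpos; simpl.
  - induction R0 as [|r R0 IHR]; simpl. lra.
    assert (0 <= h r) by (apply Hpos; left; auto).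
    assert (0 <= sumR h R0). { apply IHR. inversion NR; auto. intros x []. intros; apply Hpos; right; auto. }
    lra.
  - assert (Hin : In k R0) by (apply HI; left; auto).
    destruct (in_split _ _ Hin) as [R1 [R2 E]]. subst R0.
    assert (Hs : sumR h (R1 ++ k :: R2) = h k + sumR h (R1 ++ R2)).
    { clear. induction R1; simpl. reflexivity. rewrite IHR1. ring. }
    rewrite Hs. apply Rplus_le_compat_l. apply IH.
    + apply NoDup_remove_1 with k. exact NR.
    + intros x Hx. assert (In x (R1 ++ k :: R2)) by (apply HI; right; auto).
      apply in_app_iff in H. apply in_app_iff. destruct H as [H|[H|H]]; auto. subst; contradiction.
    + intros x Hx. apply Hpos. apply in_app_iff in Hx. apply in_app_iff. simpl. tauto.
Qed.
Lemma div_le a b c d : 0 < b -> 0 < d -> a * d <= c * b -> a / b <= c / d.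
Proof.
  intros Hb Hd H.
  replace (a / b) with ((a * d) * / (b * d)) by (field; lra).
  replace (c / d) with ((c * b) * / (b * d)) by (field; lra).
  apply Rmult_le_compat_r; auto. left; apply Rinv_0_lt_compat; nra.
Qed.

Lemma PI_gt3 : 3 < PI.
Proof. pose proof PI2_3_2. lra. Qed.

Lemma tco_sq k : tco k * tco k =
  4 / (PI * PI) * (IZR k * IZR k / ((IZR k * IZR k - 1) * (IZR k * IZR k - 1))).
Proof.
  pose proof PI_gt3. unfold tco. simpl. unfold Rdiv.
  replace (IZR k * (IZR k * 1)) with (IZR k * IZR k) by ring. rewrite !Rinv_mult. ring.
Qed.

Lemma tco_opp k : tco (- k) = - tco k.
Proof. unfold tco. rewrite opp_IZR. replace ((- IZR k) ^ 2) with (IZR k ^ 2) by ring. unfold Rdiv. ring. Qed.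

Definition hfun (k : Z) : R := 1 / (IZR (Z.abs k) - 1) - 1 / IZR (Z.abs k).

Lemma hfun_bound k : (2 <= Z.abs k)%Z -> 0 <= hfun k /\ tco k * tco k <= hfun k.
Proof.
  intro Hk. pose proof PI_gt3.
  assert (HX : 2 <= IZR (Z.abs k)) by (apply IZR_le; exact Hk).
  set (X := IZR (Z.abs k)) in *.
  assert (EX : IZR k * IZR k = X * X).
  { unfold X. rewrite abs_IZR. rewrite <- Rabs_mult. symmetry. apply Rabs_pos_eq. nra. }
  assert (Eh : hfun k = 1 / (X * (X - 1))) by (unfold hfun; fold X; field; lra).
  rewrite Eh. split.
  - unfold Rdiv. rewrite Rmult_1_l. left. apply Rinv_0_lt_compat. nra.
  - rewrite tco_sq, EX.
    assert (H1 : 4 / (PI * PI) <= 1 / 2) by (apply div_le; nra).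
    assert (H3 : 3 <= X * X - 1) by nra.
    assert (H2 : X * X / ((X * X - 1) * (X * X - 1)) <= 2 / (X * (X - 1))).
    { apply div_le. nra. nra.
      assert (0 <= X * X * (X * X + X - 4) + 2) by (assert (0 <= X*X + X - 4) by nra; nra).
      nra. }
    replace (1 / (X * (X - 1))) with (1 / 2 * (2 / (X * (X - 1)))) by (field; lra).
    apply Rmult_le_compat; auto.
    + unfold Rdiv. apply Rmult_le_pos. lra. left; apply Rinv_0_lt_compat; nra.
    + unfold Rdiv. apply Rmult_le_pos. nra. left; apply Rinv_0_lt_compat. apply Rmult_lt_0_compat; lra.
Qed.

Fixpoint Rg (m j : nat) : list Z :=
  match j with
  | O => []
  | S i => Z.of_nat (m + S i) :: (- Z.of_nat (m + S i))%Z :: Rg m i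
  end.

Lemma In_Rg m j k : In k (Rg m j) <-> (Z.of_nat m < Z.abs k <= Z.of_nat (m + j))%Z.
Proof.
  induction j as [|j IH]; cbn [Rg In].
  - split. intros []. lia.
  - rewrite IH. lia.
Qed.

Lemma NoDup_Rg m j : NoDup (Rg m j).
Proof.
  induction j as [|j IH]; cbn [Rg]. constructor.
  constructor. intros [H|H]. lia. apply In_Rg in H. lia.
  constructor. intro H. apply In_Rg in H. lia. exact IH.
Qed.

Lemma sum_Rg m j : (1 <= m)%nat -> sumR hfun (Rg m j) = 2 * (1 / INR m - 1 / INR (m + j)).
Proof.
  intro Hm. assert (HM : 1 <= INR m) by (apply (le_INR 1); lia).
  induction j as [|j IH]; cbn [Rg sumR fold_right].
  - rewrite Nat.add_0_r. ring.
  - fold (sumR hfun (Rg m j)). rewrite IH.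
    assert (E1 : IZR (Z.abs (Z.of_nat (m + S j))) = INR (m + j) + 1).
    { rewrite Z.abs_eq by lia. rewrite <- INR_IZR_INZ. rewrite Nat.add_succ_r, S_INR. reflexivity. }
    assert (E2 : IZR (Z.abs (- Z.of_nat (m + S j))) = INR (m + j) + 1).
    { rewrite Z.abs_opp. exact E1. }
    unfold hfun. rewrite E1, E2. rewrite Nat.add_succ_r, S_INR.
    assert (1 <= INR (m + j)) by (apply (le_INR 1); lia).
    field. lra.
Qed.

Fixpoint sumabs (l : list Z) : nat :=
  match l with [] => O | k :: l' => (Z.to_nat (Z.abs k) + sumabs l')%nat end.

Lemma sumabs_ge l k : In k l -> (Z.abs k <= Z.of_nat (sumabs l))%Z.
Proof. induction l as [|x l IH]; simpl. intros []. intros [H|H]. subst; lia. specialize (IH H). lia. Qed.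

Lemma sumR_le (f g : Z -> R) l : (forall k, In k l -> f k <= g k) -> sumR f l <= sumR g l.
Proof.
  induction l as [|k l IH]; simpl; intro H. lra.
  apply Rplus_le_compat. apply H; auto. apply IH; intros; apply H; auto.
Qed.

Lemma tail_sum D m : (1 <= m)%nat -> NoDup D -> (forall k, In k D -> (Z.of_nat m < Z.abs k)%Z) ->
  sumsq D tco <= 2 / INR m.
Proof.
  intros Hm ND HD. change (sumsq D tco) with (sumR (fun k => tco k * tco k) D).
  apply Rle_trans with (sumR hfun D).
  { apply sumR_le. intros k Hk. apply hfun_bound. specialize (HD k Hk). lia. }
  apply Rle_trans with (sumR hfun (Rg m (sumabs D))).
  { apply sumR_incl; auto. apply NoDup_Rg.
    - intros k Hk. apply In_Rg. split. auto. pose proof (sumabs_ge D k Hk). lia.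
    - intros k Hk. apply In_Rg in Hk. apply hfun_bound. lia. }
  rewrite sum_Rg by exact Hm.
  assert (1 <= INR (m + sumabs D)) by (apply (le_INR 1); lia).
  assert (0 < 1 / INR (m + sumabs D)) by (unfold Rdiv; rewrite Rmult_1_l; apply Rinv_0_lt_compat; lra).
  unfold Rdiv in *. lra.
Qed.

Lemma En_bound_aux n : sumsq (En (S n)) tco <= 8 / (PI * PI) * (28/45 - (8/15) / (2 * INR (S n) + 1)).
Proof.
  pose proof PI_gt3.
  assert (HK : 0 < 8 / (PI * PI)) by (unfold Rdiv; apply Rmult_lt_0_compat; [lra|apply Rinv_0_lt_compat; nra]).
  induction n as [|n IH].
  - cbn [En sumsq fold_right]. rewrite tco_opp.
    replace (- tco (2 * Z.of_nat 1) * - tco (2 * Z.of_nat 1)) with (tco (2 * Z.of_nat 1) * tco (2 * Z.of_nat 1)) by ring.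
    rewrite tco_sq. simpl INR. simpl Z.of_nat. simpl IZR.
    right. field. lra.
  - assert (E : sumsq (En (S (S n))) tco = 2 * (tco (2 * Z.of_nat (S (S n))) * tco (2 * Z.of_nat (S (S n)))) + sumsq (En (S n)) tco).
    { change (En (S (S n))) with ((2 * Z.of_nat (S (S n)))%Z :: (- (2 * Z.of_nat (S (S n))))%Z :: En (S n)).
      unfold sumsq. cbn [fold_right]. rewrite tco_opp. ring. }
    rewrite E. rewrite tco_sq.
    assert (Ey : IZR (2 * Z.of_nat (S (S n))) = 2 * (INR n + 2)).
    { rewrite mult_IZR, <- INR_IZR_INZ, !S_INR. ring. }
    rewrite Ey. rewrite !S_INR in *.
    assert (Hn : 0 <= INR n) by apply pos_INR.
    set (y := 2 * (INR n + 2)) in *.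
    set (Q := sumsq (En (S n)) tco) in *.
    assert (Hy : 4 <= y) by (unfold y; lra).
    assert (H1 : y * y / ((y * y - 1) * (y * y - 1)) <= (16/15) / (y * y - 1)).
    { assert (15 <= y * y - 1) by nra.
      apply div_le. apply Rmult_lt_0_compat; lra. lra.
      assert (0 <= (y * y - 1) * (y * y - 16)) by (apply Rmult_le_pos; nra). nra. }
    assert (H2 : 8 / 15 / (2 * (INR n + 1) + 1) = 8 / 15 / (2 * (INR n + 1 + 1) + 1) + (16/15) / (y * y - 1)).
    { unfold y. field. repeat split; apply Rgt_not_eq; nra. }
    set (aa := y * y / ((y * y - 1) * (y * y - 1))) in *.
    set (b1 := 8 / 15 / (2 * (INR n + 1) + 1)) in *.
    set (b2 := 8 / 15 / (2 * (INR n + 1 + 1) + 1)) in *.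
    set (cc := 16 / 15 / (y * y - 1)) in *.
    set (K := 8 / (PI * PI)) in *.
    assert (H3 : 2 * (4 / (PI * PI) * aa) = K * aa) by (unfold K, Rdiv; ring).
    assert (H4 : K * aa <= K * cc) by (apply Rmult_le_compat_l; lra).
    assert (H5 : K * (28 / 45 - b1) = K * (28 / 45 - b2) - K * cc) by (rewrite H2; ring).
    rewrite H3. lra.
Qed.

Lemma En_bound n : sumsq (En n) tco <= 1 - 4 / PI ^ 2.
Proof.
  pose proof PI_gt3.
  assert (Hf : 8 / (PI * PI) * (28 / 45) <= 1 - 4 / PI ^ 2).
  { assert (E : 1 - 4 / PI ^ 2 - 8 / (PI * PI) * (28 / 45) = (PI * PI - 404/45) * / (PI * PI)) by (simpl; field; lra).
    assert (0 <= (PI * PI - 404/45) * / (PI * PI)).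
    { apply Rmult_le_pos. nra. left; apply Rinv_0_lt_compat; nra. }
    lra. }
  destruct n as [|n].
  - simpl. assert (0 < PI ^ 2) by (simpl; nra).
    assert (4 / PI ^ 2 <= 1 / 1) by (apply div_le; simpl; nra). unfold Rdiv in *. rewrite Rinv_1, Rmult_1_r in *. replace (PI ^ 2) with (PI * PI) in * by ring.
    lra.
  - eapply Rle_trans. apply En_bound_aux. eapply Rle_trans; [|exact Hf].
    apply Rmult_le_compat_l. unfold Rdiv; left; apply Rmult_lt_0_compat; [lra|apply Rinv_0_lt_compat; nra].
    assert (0 < 8/15/(2 * INR (S n) + 1)).
    { pose proof (pos_INR (S n)). unfold Rdiv. apply Rmult_lt_0_compat. lra. apply Rinv_0_lt_compat; lra. }
    lra.
Qed.
Lemma norm_le_sqrt (A : CStarAlg) (x : A) s : norm x * norm x <= s -> norm x <= sqrt s.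
Proof.
  intro H. rewrite <- (sqrt_square (norm x)) by apply norm_nonneg. apply sqrt_le_1_alt. exact H.
Qed.

Lemma Tsmall eps : 0 < eps -> exists N, (1 <= N)%nat /\ 2 * sqrt (2 / INR (2 * N)) < eps.
Proof.
  intro He. destruct (archimed_cor1 (eps * eps / 4)) as [N [HN1 HN2]]. nra.
  exists N. split. lia.
  assert (HN : 0 < INR N) by (apply lt_0_INR; lia).
  assert (Ev : 2 / INR (2 * N) = / INR N) by (rewrite mult_INR; simpl; field; lra).
  rewrite Ev. pose proof (sqrt_sqrt (/ INR N) (Rlt_le _ _ (Rinv_0_lt_compat _ HN))).
  pose proof (sqrt_pos (/ INR N)).
  destruct (Rlt_or_le (2 * sqrt (/ INR N)) eps) as [L|L]; auto. exfalso. nra.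
Qed.

Section Main.
Variable A : CStarAlg.
Variable a : Z -> A.
Hypothesis hCAR : CAR_relations A a.

Definition useq (n : nat) : A := Lm A a (combc A a (En n) tco).

Lemma tail_norm K1 K2 N : (1 <= N)%nat -> NoDup K1 -> NoDup K2 ->
  (forall k, In k K1 -> Z.even k = true /\ k <> 0%Z) ->
  (forall k, In k K2 -> Z.even k = true /\ k <> 0%Z) ->
  incl (En N) K1 -> incl (En N) K2 ->
  norm (sub A (Lm A a (combc A a K1 tco)) (Lm A a (combc A a K2 tco))) <= 2 * sqrt (2 / INR (2 * N)).
Proof.
  intros HN N1 N2 E1 E2 I1 I2.
  rewrite <- Lm_sub, diff_decomp by assumption.
  eapply Rle_trans. apply (norm_Lm A a hCAR).
  apply Rmult_le_compat_l. lra.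
  apply norm_le_sqrt. eapply Rle_trans. apply (norm_comb A a hCAR). apply NoDup_Dl; auto.
  rewrite sumsq_fD. apply tail_sum. lia. apply NoDup_Dl; auto.
  intros k Hk. apply In_Dl in Hk. rewrite Nat2Z.inj_mul.
  destruct Hk as [[H1 H2]|[H1 H2]].
  - destruct (E1 k H1) as [Ev Hz].
    assert (~ In k (En N)) by (intro; apply H2; apply I2; auto).
    assert (~ (Z.abs k <= 2 * Z.of_nat N)%Z) by (intro Hc; apply H; apply In_En; auto). simpl Z.of_nat. lia.
  - destruct (E2 k H1) as [Ev Hz].
    assert (~ In k (En N)) by (intro; apply H2; apply I1; auto).
    assert (~ (Z.abs k <= 2 * Z.of_nat N)%Z) by (intro Hc; apply H; apply In_En; auto). simpl Z.of_nat. lia.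
Qed.

Lemma En_props n : NoDup (En n) /\ (forall k, In k (En n) -> Z.even k = true /\ k <> 0%Z).
Proof. split. apply NoDup_En. intros k Hk. apply In_En in Hk. tauto. Qed.

Lemma En_incl N n : (N <= n)%nat -> incl (En N) (En n).
Proof. intros H k Hk. apply In_En in Hk. apply In_En. destruct Hk as [? [? ?]]. repeat split; auto. lia. Qed.

Lemma norm_le_sub (x y : A) : norm x <= norm y + norm (sub A y x).
Proof.
  assert (E : x = add y (opp (sub A y x))).
  { rewrite opp_sub. unfold sub. rewrite add_assoc, (add_comm y x), <- add_assoc, add_opp, add_zero. reflexivity. }
  rewrite E at 1. eapply Rle_trans. apply norm_triangle. rewrite norm_opp. lra.
Qed.

Lemma useq_bound n : norm (useq n) <= 2 * sqrt (1 - 4 / PI ^ 2).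
Proof.
  unfold useq. eapply Rle_trans. apply (norm_Lm A a hCAR).
  apply Rmult_le_compat_l. lra.
  apply norm_le_sqrt. eapply Rle_trans. apply (norm_comb A a hCAR). apply NoDup_En. apply En_bound.
Qed.

Theorem main_sec : exists S : A, sum_X_ni_0_converges_to A a S /\
    norm S <= 2 * sqrt (1 - 4 / PI ^ 2).
Proof.
  destruct (complete A useq) as [S HS].
  { intros eps He. destruct (Tsmall eps He) as [N [HN HT]]. exists N. intros p q Hp Hq.
    eapply Rle_lt_trans; [|exact HT]. unfold useq.
    destruct (En_props p) as [P1 P2]. destruct (En_props q) as [Q1 Q2].
    apply (tail_norm (En p) (En q) N); auto; apply En_incl; auto. }
  exists S. split.
  - intros eps He. destruct (Tsmall (eps / 2) ltac:(lra)) as [N [HN HT]].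
    exists (Gn N). split. apply admissible_Gn.
    intros F HF HI.
    destruct (HS (eps / 2) ltac:(lra)) as [n0 Hn0].
    set (n := Nat.max n0 N).
    specialize (Hn0 n ltac:(unfold n; lia)).
    assert (HF0 : Forall (fun X => In 0%Z X) F).
    { destruct HF as [_ HF]. eapply Forall_impl; [|exact HF]. simpl. tauto. }
    rewrite (sumPsi_keys A a F HF0).
    destruct (keys_prop F HF) as [K1 K2].
    destruct (En_props n) as [P1 P2].
    change (add ?x (opp S)) with (sub A x S).
    eapply Rle_lt_trans. apply (norm_sub_tri A _ (useq n)).
    assert (norm (sub A (Lm A a (combc A a (keys F) tco)) (useq n)) <= 2 * sqrt (2 / INR (2 * N))).
    { unfold useq. apply tail_norm; auto.
      - rewrite <- keys_Gn. apply keys_incl. exact HI.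
      - apply En_incl. unfold n; lia. }
    change (norm (sub A (useq n) S) < eps / 2) in Hn0. lra.
  - destruct (Rle_or_lt (norm S) (2 * sqrt (1 - 4 / PI ^ 2))) as [L|L]; auto. exfalso.
    set (d := norm S - 2 * sqrt (1 - 4 / PI ^ 2)).
    destruct (HS d ltac:(unfold d; lra)) as [n0 Hn0].
    specialize (Hn0 n0 (le_n _)).
    pose proof (norm_le_sub S (useq n0)). pose proof (useq_bound n0).
    change (norm (sub A (useq n0) S) < d) in Hn0. unfold d in Hn0. lra.
Qed.

End Main.

Theorem mainTheorem8 (A : CStarAlg) (a : Z -> A) (hCAR : CAR_relations A a) :
  exists S : A, sum_X_ni_0_converges_to A a S /\
    norm S <= 2 * sqrt (1 - 4 / PI ^ 2).
Proof. exact (main_sec A a hCAR). Qed.
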